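(* Let $V\colon\mathbf{ZZ}\to\mathbf{Vec}$ be an indecomposable zigzag persistence module. Then there exists an integer $t\geq 0$ such that for every even integer $i\ge t$ the map $f_i\colon V_i\to V_{i+1}$ is injective and the map $g_i\colon V_i\to V_{i-1}$ is surjective. Dually, there exists an integer $s\le 0$ such that for every even integer $i\le s$ the map $f_i$ is surjective and $g_i$ is injective.
   Context: Fix a field $\mathbb{F}$; $\mathbf{Vec}$ denotes the category of finite-dimensional $\mathbb{F}$-vector spaces. $\mathbf{ZZ}$ is the category whose objects are the integers, with non-identity morphisms $i\to i-1$ and $i\to i+1$ for every even integer $i$. A zigzag persistence module is a functor $V\colon\mathbf{ZZ}\to\mathbf{Vec}$, with $g_i=V(i\to i-1)\colon V_i\to V_{i-1}$ and $f_i=V(i\to i+1)\colon V_i\to V_{i+1}$ for even $i$. Direct sums are pointwise; $V$ is indecomposable if it is nonzero and there are no nonzero $U,W$ with $V\cong U\oplus W$. *)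

(* Defs.v *)
From HB Require Import structures.
From mathcomp Require Import all_boot all_order all_algebra.
Set Implicit Arguments. Unset Strict Implicit. Unset Printing Implicit Defensive.
Import Order.TTheory GRing.Theory Num.Theory.
Local Open Scope ring_scope.

(* V_i is represented as the coordinate space 'rV[F]_(zdim i);
   a linear map V_i -> V_j is a matrix acting on row vectors (v |-> v *m A).
   zf i represents f_i : V_i -> V_{i+1} and zg i represents g_i : V_i -> V_{i-1};
   they are only meaningful (and only ever used) for even i. *)
Record zzmod (F : fieldType) := ZZmod {
  zdim : int -> nat;
  zf : forall i : int, 'M[F]_(zdim i, zdim (i + 1));
  zg : forall i : int, 'M[F]_(zdim i, zdim (i - 1))
}.

Definition zeven (i : int) : bool := (2 %| i)%Z.

Definition zzmorph (F : fieldType) (V W : zzmod F)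
  (phi : forall i : int, 'M[F]_(zdim V i, zdim W i)) : Prop :=
  forall i : int, zeven i ->
    zf V i *m phi (i + 1) = phi i *m zf W i /\
    zg V i *m phi (i - 1) = phi i *m zg W i.

Definition zziso (F : fieldType) (V W : zzmod F) : Prop :=
  exists (phi : forall i : int, 'M[F]_(zdim V i, zdim W i))
         (psi : forall i : int, 'M[F]_(zdim W i, zdim V i)),
    [/\ zzmorph phi, zzmorph psi,
        forall i, phi i *m psi i = 1%:M &
        forall i, psi i *m phi i = 1%:M].

Definition zzsum (F : fieldType) (U W : zzmod F) : zzmod F :=
  @ZZmod F (fun i => (zdim U i + zdim W i)%N)
    (fun i => block_mx (zf U i) 0 0 (zf W i))
    (fun i => block_mx (zg U i) 0 0 (zg W i)).

Definition zznonzero (F : fieldType) (V : zzmod F) : Prop :=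
  exists i : int, zdim V i <> 0%N.

Definition zzindecomposable (F : fieldType) (V : zzmod F) : Prop :=
  zznonzero V /\
  ~ (exists U W : zzmod F, [/\ zznonzero U, zznonzero W & zziso V (zzsum U W)]).

Definition lin_injective (F : fieldType) m n (A : 'M[F]_(m, n)) : Prop :=
  injective (fun v : 'rV[F]_m => v *m A).
Definition lin_surjective (F : fieldType) m n (A : 'M[F]_(m, n)) : Prop :=
  forall w : 'rV[F]_n, exists v : 'rV[F]_m, v *m A = w.

(* Main.v *)
Require Import Defs.
From HB Require Import structures.
From mathcomp Require Import all_boot all_order all_algebra zify.
From Stdlib Require Import Classical ClassicalEpsilon.
Import Order.TTheory GRing.Theory Num.Theory.
Local Open Scope ring_scope.

Set Implicit Arguments. Unset Strict Implicit. Unset Printing Implicit Defensive.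
Import Order.TTheory GRing.Theory Num.Theory.
Local Open Scope ring_scope.

Section SplitAbs.
Variable F : fieldType.
Variable V : zzmod F.
Variable e : forall i, 'M[F]_(zdim V i).
Hypothesis em : zzmorph e.
Variables (ru rw : int -> nat).
Variable BU : forall i, 'M[F]_(ru i, zdim V i).
Variable BW : forall i, 'M[F]_(rw i, zdim V i).
Variable pU : forall i, 'M[F]_(zdim V i, ru i).
Variable pW : forall i, 'M[F]_(zdim V i, rw i).
Hypothesis BUe : forall i, BU i *m e i = BU i.
Hypothesis BWe : forall i, BW i *m e i = 0.
Hypothesis eU : forall i, e i *m pU i *m BU i = e i.
Hypothesis eW : forall i, (1%:M - e i) *m pW i *m BW i = 1%:M - e i.
Hypothesis UpU : forall i, BU i *m pU i = 1%:M.
Hypothesis WpW : forall i, BW i *m pW i = 1%:M.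
Hypothesis subU : forall i m (x : 'M_(m, zdim V i)), x *m e i = x -> x *m pU i *m BU i = x.
Hypothesis subW : forall i m (x : 'M_(m, zdim V i)), x *m e i = 0 -> x *m pW i *m BW i = x.

Lemma BWe' i : BW i *m (1%:M - e i) = BW i.
Proof. by rewrite mulmxBr mulmx1 BWe subr0. Qed.
Lemma BUe' i : BU i *m (1%:M - e i) = 0.
Proof. by rewrite mulmxBr mulmx1 BUe subrr. Qed.

Definition Umod : zzmod F := @ZZmod F ru
  (fun i => BU i *m zf V i *m pU (i + 1)) (fun i => BU i *m zg V i *m pU (i - 1)).
Definition Wmod : zzmod F := @ZZmod F rw
  (fun i => BW i *m zf V i *m pW (i + 1)) (fun i => BW i *m zg V i *m pW (i - 1)).

Lemma split_iso : zziso V (zzsum Umod Wmod).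
Proof.
exists (fun i => row_mx (e i *m pU i) ((1%:M - e i) *m pW i)).
exists (fun i => col_mx (BU i) (BW i)).
split.
- move=> i ev; have [h1 h2] := em ev; rewrite /=.
  rewrite !mul_mx_row !mul_row_block !mulmx0 !addr0 !add0r; split.
  + congr row_mx.
      by rewrite !mulmxA eU -h1.
    by rewrite !mulmxA eW !mulmxBl !mulmxBr !mulmx1 !mul1mx h1 mulmxBl.
  + congr row_mx.
      by rewrite !mulmxA eU -h2.
    by rewrite !mulmxA eW !mulmxBl !mulmxBr !mulmx1 !mul1mx h2 mulmxBl.
- move=> i ev; have [h1 h2] := em ev; rewrite /=.
  rewrite !mul_block_col !mul0mx !addr0 !add0r !mul_col_mx; split.
  + congr col_mx.
      by rewrite subU // -mulmxA h1 mulmxA BUe.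
    rewrite subW //.
    by rewrite -mulmxA h1 mulmxA BWe mul0mx.
  + congr col_mx.
      by rewrite subU // -mulmxA h2 mulmxA BUe.
    rewrite subW //.
    by rewrite -mulmxA h2 mulmxA BWe mul0mx.
- move=> i; rewrite mul_row_col eU eW; by rewrite addrC subrK.
- move=> i; rewrite mul_col_row.
  rewrite !mulmxA BUe BWe BUe' BWe' !mul0mx UpU WpW.
  by rewrite -scalar_mx_block.
Qed.
End SplitAbs.

Section Split.
Variable F : fieldType.
Variable V : zzmod F.
Variable e : forall i, 'M[F]_(zdim V i).
Hypothesis em : zzmorph e.
Hypothesis ee : forall i, e i *m e i = e i.

Lemma split_idem : zzindecomposable V -> (forall i, e i = 0) \/ (forall i, e i = 1%:M).
Proof.
case=> _ nd.
case: (classic (exists i, \rank (e i) <> 0%N)) => [hU|hU].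
- right => i.
  case: (classic (exists i, \rank (1%:M - e i) <> 0%N)) => [hW|hW].
    exfalso; apply: nd.
    have sU j m (x : 'M_(m, zdim V j)) : x *m e j = x -> x *m pinvmx (row_base (e j)) *m row_base (e j) = x.
      by move=> h; apply: mulmxKpV; rewrite eq_row_base -h submxMl.
    have sW j m (x : 'M_(m, zdim V j)) : x *m e j = 0 -> x *m pinvmx (row_base (1%:M - e j)) *m row_base (1%:M - e j) = x.
      move=> h; apply: mulmxKpV; rewrite eq_row_base.
      have <- : x *m (1%:M - e j) = x by rewrite mulmxBr mulmx1 h subr0.
      by rewrite submxMl.
    have bue j : row_base (e j) *m e j = row_base (e j).
      have : (row_base (e j) <= e j)%MS by rewrite eq_row_base.
      by case/submxP=> D ->; rewrite -mulmxA ee.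
    have bwe j : row_base (1%:M - e j) *m e j = 0.
      have : (row_base (1%:M - e j) <= 1%:M - e j)%MS by rewrite eq_row_base.
      by case/submxP=> D ->; rewrite -mulmxA mulmxBl mul1mx ee subrr mulmx0.
    exists (Umod (fun j => row_base (e j)) (fun j => pinvmx (row_base (e j)))).
    exists (Wmod (fun j => row_base (1%:M - e j)) (fun j => pinvmx (row_base (1%:M - e j)))).
    split => //.
    apply: split_iso => //.
    + exact: em.
    + by move=> j; apply: sU; rewrite ee.
    + by move=> j; apply: sW; rewrite mulmxBl mul1mx ee subrr.
    + by move=> j; rewrite mulmxVp ?row_base_free.
    + by move=> j; rewrite mulmxVp ?row_base_free.
  have : \rank (1%:M - e i) == 0%N by apply/eqP; apply: NNPP => h; apply: hW; exists i.
  by rewrite mxrank_eq0 subr_eq0 => /eqP <-.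
- left => i; apply/eqP; rewrite -mxrank_eq0; apply/eqP; apply: NNPP => h; apply: hU; by exists i.
Qed.
End Split.

Set Implicit Arguments. Unset Strict Implicit. Unset Printing Implicit Defensive.
Import Order.TTheory GRing.Theory Num.Theory.
Local Open Scope ring_scope.

Section LinAux.
Variable F : fieldType.

Lemma eqmx_rows n m1 m2 (A : 'M[F]_(m1, n)) (B : 'M[F]_(m2, n)) :
  (forall y : 'rV_n, (y <= A)%MS = (y <= B)%MS) -> (A == B)%MS.
Proof.
move=> h; apply/andP; split; apply/row_subP => i.
  by rewrite -h row_sub.
by rewrite h row_sub.
Qed.

Definition ann n (A : 'M[F]_n) : 'M[F]_n := kermx A^T.

Lemma annP n (A : 'M[F]_n) m (y : 'M_(m, n)) : (y <= ann A)%MS = (y *m A^T == 0).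
Proof. by rewrite sub_kermx. Qed.

Lemma ann_anti n (A B : 'M[F]_n) : (A <= B)%MS -> (ann B <= ann A)%MS.
Proof.
case/submxP=> D ->; rewrite annP trmx_mul mulmxA.
have /eqP -> : ann B *m B^T == 0 by rewrite -annP.
by rewrite mul0mx.
Qed.

Lemma ann_eq n (A B : 'M[F]_n) : (A == B)%MS -> (ann A == ann B)%MS.
Proof. by case/andP=> h1 h2; apply/andP; split; apply: ann_anti. Qed.

Lemma annA0 n (A : 'M[F]_n) : ann A *m A^T = 0.
Proof. by apply/eqP; rewrite -annP. Qed.

Lemma mxrank_ann n (A : 'M[F]_n) : \rank (ann A) = (n - \rank A)%N.
Proof. by rewrite /ann mxrank_ker mxrank_tr. Qed.

Lemma ann_ann n (A : 'M[F]_n) : (ann (ann A) == A)%MS.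
Proof.
have sA : (A <= ann (ann A))%MS.
  by rewrite annP; apply/eqP; rewrite -[LHS]trmxK trmx_mul trmxK annA0 trmx0.
apply/andP; split => //.
have := mxrank_leqif_sup sA; case=> _ <-.
by rewrite !mxrank_ann subKn ?rank_leq_col.
Qed.

End LinAux.

Local Unset Implicit Arguments.
Section Frame.
Context {F : fieldType}.
Variable d : nat -> nat.
Variable st : forall k, ('M[F]_(d k, d k.+1) + 'M[F]_(d k.+1, d k))%type.

Definition rel k (x : 'rV[F]_(d k)) (y : 'rV[F]_(d k.+1)) : Prop :=
  match st k with inl M => x *m M = y | inr M => y *m M = x end.

Definition back k (B : 'M[F]_(d k.+1)) : 'M[F]_(d k) :=
  match st k with inl M => kermx (M *m cokermx B) | inr M => <<B *m M>>%MS end.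

Lemma backP k (B : 'M[F]_(d k.+1)) x :
  (x <= back k B)%MS <-> exists y, (y <= B)%MS /\ rel k x y.
Proof.
rewrite /back /rel; case: (st k) => M; split.
- by rewrite sub_kermx mulmxA -submxE => h; exists (x *m M).
- by case=> y [yB e]; rewrite sub_kermx mulmxA e -submxE.
- rewrite genmxE => /submxP [D ->]; exists (D *m B); split; first exact: submxMl.
  by rewrite mulmxA.
- by case=> y [yB <-]; rewrite genmxE submxMr.
Qed.

Lemma back_mono k (B B' : 'M[F]_(d k.+1)) : (B <= B')%MS -> (back k B <= back k B')%MS.
Proof.
move=> h; apply/row_subP => i.
have /backP [y [yB r]] : (row i (back k B) <= back k B)%MS by apply: row_sub.
by apply/backP; exists y; split => //; apply: submx_trans h.
Qed.

Fixpoint T (base : forall k, 'M[F]_(d k)) m : forall k, 'M[F]_(d k) :=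
  match m with 0 => base | m'.+1 => fun k => back k (T base m' k.+1) end.

Lemma T_mono base base' : (forall k, (base k <= base' k)%MS) ->
  forall m k, (T base m k <= T base' m k)%MS.
Proof. by move=> hb; elim=> [|m IH] k //=; apply: back_mono. Qed.

Definition one : forall k, 'M[F]_(d k) := fun k => 1%:M.
Definition zero : forall k, 'M[F]_(d k) := fun k => 0.
Definition D := T one.
Definition N := T zero.

Lemma D_decr m k : (D m.+1 k <= D m k)%MS.
Proof.
elim: m k => [|m IH] k; first exact: submx1.
by apply: back_mono; apply: IH.
Qed.
Lemma N_incr m k : (N m k <= N m.+1 k)%MS.
Proof.
elim: m k => [|m IH] k; first exact: sub0mx.
by apply: back_mono; apply: IH.
Qed.
Lemma D_anti m m' k : (m <= m')%N -> (D m' k <= D m k)%MS.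
Proof.
move=> h; elim: m' h => [|m' IH]; first by rewrite leqn0 => /eqP ->.
rewrite leq_eqVlt => /orP [/eqP -> //|]; rewrite ltnS => /IH.
exact: submx_trans (D_decr _ _).
Qed.
Lemma N_mono m m' k : (m <= m')%N -> (N m k <= N m' k)%MS.
Proof.
move=> h; elim: m' h => [|m' IH]; first by rewrite leqn0 => /eqP ->.
rewrite leq_eqVlt => /orP [/eqP -> //|]; rewrite ltnS => /IH h.
exact: submx_trans h (N_incr _ _).
Qed.
Lemma N0 k : N 0 k = 0. Proof. by []. Qed.

Lemma D_stab k : exists m0, forall m, (D m0 k <= D m k)%MS.
Proof.
have [m0 h0] : exists m0, forall m, (\rank (D m0 k) <= \rank (D m k))%N.
  suff : forall n m, (\rank (D m k) <= n)%N -> exists m0, forall m, (\rank (D m0 k) <= \rank (D m k))%N.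
    by move/(_ _ 0%N (leqnn _)).
  elim=> [|n IH] m hm.
    by exists m => m'; rewrite (leq_trans hm).
  case: (classic (exists m', (\rank (D m' k) < \rank (D m k))%N)) => [[m' hm']|nh].
    by apply: (IH m'); rewrite -ltnS (leq_trans hm').
  exists m => m'; rewrite leqNgt; apply/negP => h; apply: nh; by exists m'.
exists m0 => m; case: (leqP m0 m) => hm.
  have hs := D_anti _ _ k hm.
  have := mxrank_leqif_sup hs; case=> _ <-.
  by rewrite eqn_leq h0 mxrankS.
by apply: D_anti; apply: ltnW.
Qed.

Lemma N_stab k : exists m0, forall m, (N m k <= N m0 k)%MS.
Proof.
have [m0 h0] : exists m0, forall m, (\rank (N m k) <= \rank (N m0 k))%N.
  suff : forall n m, (d k - \rank (N m k) <= n)%N -> exists m0, forall m, (\rank (N m k) <= \rank (N m0 k))%N.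
    by move/(_ _ 0%N (leqnn _)).
  elim=> [|n IH] m hm.
    exists m => m'; apply: leq_trans (rank_leq_col (N m' k)) _.
    by move: hm; rewrite leqn0 subn_eq0.
  case: (classic (exists m', (\rank (N m k) < \rank (N m' k))%N)) => [[m' hm']|nh].
    apply: (IH m'); rewrite -ltnS (leq_trans _ hm) // ltn_sub2l //.
    by apply: leq_trans hm' (rank_leq_col _).
  exists m => m'; rewrite leqNgt; apply/negP => h; apply: nh; by exists m'.
exists m0 => m; case: (leqP m m0) => hm; first exact: N_mono.
have hs := N_mono _ _ k (ltnW hm).
have := mxrank_leqif_sup hs; case=> _ <-.
by rewrite eqn_leq h0 mxrankS.
Qed.

Definition SD k (x : 'rV[F]_(d k)) := forall m, (x <= D m k)%MS.

Lemma SD_step k x : SD k x -> exists y, SD k.+1 y /\ rel k x y.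
Proof.
move=> hx; have [m0 h0] := D_stab k.+1.
have /backP [y [yD r]] : (x <= D m0.+1 k)%MS by apply: hx.
exists y; split => // m; by apply: submx_trans yD (h0 m).
Qed.

Fixpoint iterd (x : 'rV[F]_(d 0)) (s : forall k, 'rV[F]_(d k) -> 'rV[F]_(d k.+1)) k : 'rV[F]_(d k) :=
  match k with 0 => x | k'.+1 => s k' (iterd x s k') end.

Lemma build (P : forall k, 'rV[F]_(d k) -> Prop) (Q : nat -> Prop) x :
  P 0%N x -> (forall k y, Q k -> P k y -> exists z, P k.+1 z /\ rel k y z) ->
  (forall k, Q k.+1 -> Q k) ->
  exists w : forall k, 'rV[F]_(d k), w 0%N = x /\ forall k, Q k -> P k (w k) /\ rel k (w k) (w k.+1).
Proof.
move=> h0 hs hQ.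
have H' : forall k (y : 'rV[F]_(d k)), exists z, (Q k /\ P k y) -> (P k.+1 z /\ rel k y z).
  move=> k y; case: (classic (Q k /\ P k y)) => [[q p]|n].
    by have [z hz] := hs k y q p; exists z.
  by exists 0 => h; exfalso; apply: n.
pose s k y := proj1_sig (constructive_indefinite_description _ (H' k y)).
have sP k y : (Q k /\ P k y) -> (P k.+1 (s k y) /\ rel k y (s k y)).
  exact: (proj2_sig (constructive_indefinite_description _ (H' k y))).
exists (iterd x s); split => // k.
suff hP : forall k, Q k -> P k (iterd x s k).
  by move=> q; split; [exact: hP | exact: (sP k _ (conj q (hP k q))).2].
elim=> [|k' IH] q //=.
exact: (sP k' _ (conj (hQ _ q) (IH (hQ _ q)))).1.
Qed.

Definition comm k (P : 'M[F]_(d k)) (Q : 'M[F]_(d k.+1)) :=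
  match st k with inl M => M *m Q = P *m M | inr M => M *m P = Q *m M end.

End Frame.

Section Dual.
Context {F : fieldType}.
Variable d : nat -> nat.
Variable st : forall k, ('M[F]_(d k, d k.+1) + 'M[F]_(d k.+1, d k))%type.

Definition stT : forall k, ('M[F]_(d k, d k.+1) + 'M[F]_(d k.+1, d k))%type :=
  fun k => match st k with inl M => inr M^T | inr M => inl M^T end.

Lemma pre_sub m n p (M : 'M[F]_(m, n)) (C : 'M[F]_n) (y : 'M_(p, m)) :
  (y <= kermx (M *m cokermx C))%MS = (y *m M <= C)%MS.
Proof. by rewrite sub_kermx mulmxA -submxE. Qed.

Lemma back_eq (s : forall k, ('M[F]_(d k, d k.+1) + 'M[F]_(d k.+1, d k))%type) k (A B : 'M[F]_(d k.+1)) :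
  (A == B)%MS -> (back d s k A == back d s k B)%MS.
Proof. by case/andP=> h1 h2; apply/andP; split; apply: back_mono. Qed.

Lemma ortho_sub p n m1 m2 (y : 'M[F]_(p, n)) (A : 'M[F]_(m1, n)) (B : 'M[F]_(m2, n)) :
  (A <= B)%MS -> y *m B^T = 0 -> y *m A^T = 0.
Proof. by case/submxP=> D -> h; rewrite trmx_mul mulmxA h mul0mx. Qed.

Lemma back_dual k (B : 'M[F]_(d k.+1)) : (back d stT k (ann B) == ann (back d st k B))%MS.
Proof.
rewrite /back /stT; case: (st k) => M.
-
  set C := ann B *m M^T.
  have hC : (ann <<C>> == kermx (M *m cokermx B))%MS.
    apply: eqmx_rows => y.
    rewrite pre_sub annP.
    have e1 : (y *m <<C>>%MS^T == 0) = (y *m C^T == 0).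
      by apply/idP/idP => /eqP h; apply/eqP; apply: ortho_sub h; rewrite genmxE.
    rewrite e1 /C trmx_mul trmxK mulmxA -annP.
    have /andP [h1 h2] := ann_ann (B).
    by apply/idP/idP => h; [apply: submx_trans h h1 | apply: submx_trans h h2].
  have /andP [h1 h2] := ann_eq hC.
  have /andP [h3 h4] := ann_ann <<C>>%MS.
  apply/andP; split.
    by apply: submx_trans h1; apply: submx_trans h4.
  by apply: submx_trans h3; apply: submx_trans h2.
- apply: eqmx_rows => y.
  rewrite pre_sub !annP -mulmxA -trmx_mul.
  by apply/idP/idP => /eqP h; apply/eqP; apply: ortho_sub h; rewrite genmxE.
Qed.

Lemma eqb_trans n m1 m2 m3 (A : 'M[F]_(m1, n)) (B : 'M[F]_(m2, n)) (C : 'M[F]_(m3, n)) :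
  (A == B)%MS -> (B == C)%MS -> (A == C)%MS.
Proof.
case/andP=> h1 h2 /andP [h3 h4]; apply/andP; split; [exact: submx_trans h1 h3 | exact: submx_trans h4 h2].
Qed.

Lemma T_dual base m k :
  (T d stT (fun k => ann (base k)) m k == ann (T d st base m k))%MS.
Proof.
elim: m k => [|m IH] k /=; first by apply/andP; split.
apply: eqb_trans (back_dual _ _).
exact: back_eq.
Qed.
End Dual.

Local Set Implicit Arguments.
Section Main.
Context {F : fieldType}.
Variable d : nat -> nat.
Variable st : forall k, ('M[F]_(d k, d k.+1) + 'M[F]_(d k.+1, d k))%type.
Local Notation relS := (rel d st).
Local Notation relT := (rel d (stT d st)).
Local Notation commS := (comm d st).

Lemma pair_const k a a' b b' : relS k a a' -> relT k b b' -> a *m b^T = a' *m b'^T.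
Proof.
rewrite /rel /stT; case: (st k) => M <-.
  by move=> <-; rewrite trmx_mul trmxK mulmxA.
by move=> <-; rewrite trmx_mul trmxK mulmxA.
Qed.

Lemma comm_both k a a' b b' : relS k a a' -> relT k b b' ->
  commS k (b^T *m a) (b'^T *m a').
Proof.
rewrite /rel /stT /comm; case: (st k) => M <-.
  by move=> <-; rewrite trmx_mul trmxK !mulmxA.
by move=> <-; rewrite trmx_mul trmxK !mulmxA.
Qed.

Lemma comm_a0 k a a' b b' : relS k a a' -> a' = 0 -> commS k (b^T *m a) (b'^T *m a').
Proof.
move=> h0 h1; move: h0; rewrite /rel /comm h1; case: (st k) => M h.
  by rewrite !mulmx0 -mulmxA h mulmx0.
by rewrite -h ?mul0mx ?mulmx0 ?mul0mx.
Qed.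

Lemma comm_b0 k a a' b b' : relT k b b' -> b' = 0 -> commS k (b^T *m a) (b'^T *m a').
Proof.
move=> h0 h1; move: h0; rewrite /rel /comm /stT h1 trmx0; case: (st k) => M h.
  by rewrite -h ?(mul0mx, mulmx0, trmx0).
by rewrite !mul0mx mulmxA -[M *m _]trmxK trmx_mul trmxK h trmx0 mul0mx.
Qed.

Lemma rel00 (s : forall k, ('M[F]_(d k, d k.+1) + 'M[F]_(d k.+1, d k))%type) k : rel d s k 0 0.
Proof. by rewrite /rel; case: (s k) => M; rewrite mul0mx. Qed.

Lemma sep n (S : 'M[F]_n) (x : 'rV[F]_n) : ~~ (x <= S)%MS ->
  exists u : 'rV[F]_n, (u <= ann S)%MS /\ x *m u^T = 1%:M.
Proof.
move=> hx.
have hx' : x *m (ann S)^T != 0.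
  apply/negP => /eqP h; apply: (negP hx).
  have /andP [h1 _] := ann_ann S.
  by apply: submx_trans h1; rewrite annP h.
have [j hj] : exists j, (x *m (ann S)^T) ord0 j != 0.
  apply: NNPP => hne; apply: (negP hx'); apply/eqP; apply/matrixP => i0 j0.
  rewrite ord1; apply: NNPP => h; apply: hne; exists j0; apply/eqP => e; apply: h; by rewrite e mxE.
pose u0 := row j (ann S).
have e0 : (x *m u0^T) ord0 ord0 = (x *m (ann S)^T) ord0 j.
  by rewrite /u0 tr_row !mxE; apply: eq_bigr => l _; rewrite !mxE.
exists (((x *m u0^T) ord0 ord0)^-1 *: u0); split.
  by rewrite scalemx_sub // row_sub.
have cn : (x *m u0^T) ord0 ord0 != 0 by rewrite e0.
rewrite linearZ /= -scalemxAr {2}[x *m u0^T]mx11_scalar.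
by rewrite scale_scalar_mx mulVf.
Qed.


Lemma T_step (s : forall k, ('M[F]_(d k, d k.+1) + 'M[F]_(d k.+1, d k))%type) base m k y :
  (y <= T d s base (m - k) k)%MS -> (k < m)%N ->
  exists z, (z <= T d s base (m - k.+1) k.+1)%MS /\ rel d s k y z.
Proof. by move=> hy hk; move: hy; rewrite -(subnSK hk) /= => /backP. Qed.

Lemma T0_step (s : forall k, ('M[F]_(d k, d k.+1) + 'M[F]_(d k.+1, d k))%type) m k y :
  (y <= T d s (zero d) (m - k) k)%MS ->
  exists z, (z <= T d s (zero d) (m - k.+1) k.+1)%MS /\ rel d s k y z.
Proof.
move=> hy; case: (ltnP k m) => hk; first exact: T_step.
move: hy; have -> : (m - k = 0)%N by apply/eqP; rewrite subn_eq0.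
have -> : (m - k.+1 = 0)%N by apply/eqP; rewrite subn_eq0 (leq_trans hk).
rewrite /= submx0 => /eqP ->; exists 0; split; [exact: sub0mx | exact: rel00].
Qed.

Lemma T0_zero (s : forall k, ('M[F]_(d k, d k.+1) + 'M[F]_(d k.+1, d k))%type) m k (y : 'rV[F]_(d k)) :
  (y <= T d s (zero d) (m - k) k)%MS -> (m <= k)%N -> y = 0.
Proof.
move=> hy hk; move: hy; have -> : (m - k = 0)%N by apply/eqP; rewrite subn_eq0.
by rewrite /= submx0 => /eqP.
Qed.

Lemma DT_ann m k : (D d (stT d st) m k == ann (N d st m k))%MS.
Proof.
apply: eqb_trans (T_dual _ _ _ _ _).
apply/andP; split; apply: T_mono => j; rewrite /one /zero ?submx1 //.
by rewrite annP mul1mx trmx0.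
Qed.

Lemma NT_ann m k : (N d (stT d st) m k == ann (D d st m k))%MS.
Proof.
apply: eqb_trans (T_dual _ _ _ _ _).
apply/andP; split; apply: T_mono => j; rewrite /one /zero ?sub0mx //.
apply/row_subP => i; have : (row i (ann (1%:M : 'M[F]_(d j))) <= ann 1%:M)%MS by apply: row_sub.
by rewrite annP trmx1 mulmx1 submx0.
Qed.

Definition good (v u : forall k, 'rV[F]_(d k)) :=
  forall k, (v k *m (u k)^T = 1%:M \/ (v k = 0 /\ u k = 0)) /\
            commS k ((u k)^T *m v k) ((u k.+1)^T *m v k.+1).

Lemma pair_ind (w wc : forall k, 'rV[F]_(d k)) m :
  w 0%N *m (wc 0%N)^T = 1%:M ->
  (forall k, (k < m)%N -> relS k (w k) (w k.+1) /\ relT k (wc k) (wc k.+1)) ->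
  forall k, (k <= m)%N -> w k *m (wc k)^T = 1%:M.
Proof.
move=> h0 hr; elim=> [|k IH] hk //.
have [r1 r2] := hr k hk.
by rewrite -(pair_const r1 r2) IH // ltnW.
Qed.

Theorem frame_pair (x : 'rV[F]_(d 0)) : x != 0 ->
  exists v u : forall k, 'rV[F]_(d k), v 0%N = x /\ v 0%N *m (u 0%N)^T = 1%:M /\ good v u.
Proof.
move=> x0.
case: (classic (exists m, (x <= N d st m 0)%MS)) => [hA|nA].
  case: (ex_minnP hA) => m hm hmin.
  case: m hm hmin => [|m'] hm hmin.
    by move: hm; rewrite /= submx0 (negbTE x0).
  have hm' : ~~ (x <= N d st m' 0)%MS.
    by apply/negP => h; have := hmin _ h; rewrite ltnn.
  have [u0 [u0a u0x]] := sep hm'.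
  have u0D : (u0 <= D d (stT d st) m' 0)%MS.
    by have /andP [_ h] := DT_ann m' 0; apply: submx_trans h.
  have [wc [wc0 hwc]] := @build _ _ (stT d st)
    (fun k y => (y <= D d (stT d st) (m' - k) k)%MS) (fun k => (k < m')%N) u0
    ltac:(by rewrite /= subn0) (fun k y hk hy => T_step hy hk) (fun k h => ltnW h).
  have [w [w0 hw]] := @build _ _ st
    (fun k y => (y <= N d st (m'.+1 - k) k)%MS) (fun _ => True) x
    ltac:(by rewrite /= subn0) (fun k y _ hy => T0_step hy) (fun _ _ => I).
  have wz k : (m'.+1 <= k)%N -> w k = 0.
    by move=> hk; apply: (T0_zero (hw k I).1).
  have hp := @pair_ind w wc m' ltac:(by rewrite w0 wc0)
     (fun k hk => conj (hw k I).2 (hwc k hk).2).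
  exists w, (fun k => if (k < m'.+1)%N then wc k else 0); split => //; split.
    by rewrite w0 wc0.
  move=> k; split.
    case: (ltnP k m'.+1) => hk; first by left; apply: hp.
    by right; rewrite wz.
  case: (ltnP k m') => hk.
    rewrite !ltnS hk (ltnW hk).
    by apply: comm_both; [exact: (hw k I).2 | exact: (hwc k hk).2].
  by apply: comm_a0; [exact: (hw k I).2 | apply: wz].
case: (classic (exists m, ~~ (x <= D d st m 0)%MS)) => [hB|nB].
  case: (ex_minnP hB) => m hm hmin.
  case: m hm hmin => [|m'] hm hmin.
    by move: hm; rewrite /= submx1.
  have hm' : (x <= D d st m' 0)%MS.
    by apply: NNPP => /negP h; have := hmin _ h; rewrite ltnn.
  have [u0 [u0a u0x]] := sep hm.
  have u0D : (u0 <= N d (stT d st) m'.+1 0)%MS.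
    by have /andP [_ h] := NT_ann m'.+1 0; apply: submx_trans h.
  have [wc [wc0 hwc]] := @build _ _ (stT d st)
    (fun k y => (y <= N d (stT d st) (m'.+1 - k) k)%MS) (fun _ => True) u0
    ltac:(by rewrite /= subn0) (fun k y _ hy => T0_step hy) (fun _ _ => I).
  have [w [w0 hw]] := @build _ _ st
    (fun k y => (y <= D d st (m' - k) k)%MS) (fun k => (k < m')%N) x
    ltac:(by rewrite /= subn0) (fun k y hk hy => T_step hy hk) (fun k h => ltnW h).
  have wz k : (m'.+1 <= k)%N -> wc k = 0.
    by move=> hk; apply: (T0_zero (hwc k I).1).
  have hp := @pair_ind w wc m' ltac:(by rewrite w0 wc0)
     (fun k hk => conj (hw k hk).2 (hwc k I).2).
  exists (fun k => if (k < m'.+1)%N then w k else 0), wc; split => //; split.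
    by rewrite w0 wc0.
  move=> k; split.
    case: (ltnP k m'.+1) => hk; first by left; apply: hp.
    by right; rewrite wz.
  case: (ltnP k m') => hk.
    rewrite !ltnS hk (ltnW hk).
    by apply: comm_both; [exact: (hw k hk).2 | exact: (hwc k I).2].
  by apply: comm_b0; [exact: (hwc k I).2 | apply: wz].
have xD : SD d st 0 x.
  by move=> m; apply: NNPP => h; apply: nB; exists m; exact/negP.
have [m0 hm0] := N_stab d st 0.
have xN : ~~ (x <= N d st m0 0)%MS by apply/negP => h; apply: nA; exists m0.
have [u0 [u0a u0x]] := sep xN.
have u0D : SD d (stT d st) 0 u0.
  move=> m; have /andP [_ h] := DT_ann m 0; apply: submx_trans h.
  by apply: submx_trans u0a _; apply: ann_anti.
have [wc [wc0 hwc]] := @build _ _ (stT d st) (SD d (stT d st)) (fun _ => True) u0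
    u0D (fun k y _ hy => SD_step _ _ _ _ hy) (fun _ _ => I).
have [w [w0 hw]] := @build _ _ st (SD d st) (fun _ => True) x
    xD (fun k y _ hy => SD_step _ _ _ _ hy) (fun _ _ => I).
exists w, wc; split => //; split; first by rewrite w0 wc0.
move=> k; split.
  left; apply: (@pair_ind w wc k.+1) => //; first by rewrite w0 wc0.
  by move=> j _; split; [exact: (hw j I).2 | exact: (hwc j I).2].
by apply: comm_both; [exact: (hw k I).2 | exact: (hwc k I).2].
Qed.

End Main.

Section MainDual.
Context {F : fieldType}.
Variable d : nat -> nat.
Variable st : forall k, ('M[F]_(d k, d k.+1) + 'M[F]_(d k.+1, d k))%type.

Lemma good_dual (v u : forall k, 'rV[F]_(d k)) : good (stT d st) v u -> good st u v.
Proof.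
move=> h k; have [h1 h2] := h k; split.
  case: h1 => [e|[-> ->]]; last by right.
  by left; rewrite -[LHS]trmxK trmx_mul trmxK e trmx1.
move: h2; rewrite /comm /stT; case: (st k) => M e.
  by move/(congr1 trmx): e; rewrite !trmx_mul !trmxK !mulmxA => ->.
by move/(congr1 trmx): e; rewrite !trmx_mul !trmxK !mulmxA => ->.
Qed.

Theorem frame_pair_dual (l : 'rV[F]_(d 0)) : l != 0 ->
  exists v u : forall k, 'rV[F]_(d k), u 0%N = l /\ v 0%N *m (u 0%N)^T = 1%:M /\ good st v u.
Proof.
move=> l0; have [v [u [v0 [p g]]]] := frame_pair (stT d st) l0.
exists u, v; split => //; split; last exact: good_dual.
by rewrite -[LHS]trmxK trmx_mul trmxK p trmx1.
Qed.
End MainDual.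

Set Implicit Arguments. Unset Strict Implicit. Unset Printing Implicit Defensive.
Import Order.TTheory GRing.Theory Num.Theory.
Local Open Scope ring_scope.

Section Aux.
Variable F : fieldType.

Lemma cast_comm m n n' (h : n = n') (Z : 'M[F]_(m, n)) (P : 'M[F]_m) (Q : 'M[F]_n') :
  castmx (erefl, h) Z *m Q = P *m castmx (erefl, h) Z -> Z *m conform_mx 0 Q = P *m Z.
Proof. by case: n' / h Q => Q; rewrite castmx_id conform_mx_id. Qed.

Lemma one_eq0 m : (1%:M : 'M[F]_m) = 0 -> m = 0%N.
Proof.
case: m => // m /matrixP /(_ ord0 ord0); rewrite !mxE eqxx /= => /eqP.
by rewrite oner_eq0.
Qed.

Lemma noninj m n (A : 'M[F]_(m, n)) : ~ lin_injective A ->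
  exists x : 'rV[F]_m, x != 0 /\ x *m A = 0.
Proof.
move=> h; apply: NNPP => hn; apply: h => x1 x2 e.
apply/eqP; rewrite -subr_eq0; apply/negP => hx.
apply: hn; exists (x1 - x2); split; first exact/negP.
by rewrite mulmxBl e subrr.
Qed.

Lemma nonsurj m n (A : 'M[F]_(m, n)) : ~ lin_surjective A ->
  exists l : 'rV[F]_n, l != 0 /\ A *m l^T = 0.
Proof.
move=> h.
have nf : ~~ row_full A.
  apply/negP => /row_fullP [B hB]; apply: h => w; exists (w *m B).
  by rewrite -mulmxA hB mulmx1.
have : kermx A^T != 0 by rewrite kermx_eq0 /row_free mxrank_tr.
move=> hk.
have [i hi] : exists i, row i (kermx A^T) != 0.
  apply: NNPP => hn; apply: (negP hk); apply/eqP/row_matrixP => i; rewrite row0.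
  by apply: NNPP => hi; apply: hn; exists i; apply/eqP.
exists (row i (kermx A^T)); split => //.
have : (row i (kermx A^T) <= kermx A^T)%MS by apply: row_sub.
rewrite sub_kermx => /eqP hz.
by rewrite -[LHS]trmxK trmx_mul trmxK hz trmx0.
Qed.
End Aux.

Section Right.
Variable F : fieldType.
Variable V : zzmod F.
Variable b : int.

Definition rpos k := iter k (fun n : int => n - 1) b.
Lemma rposE k : rpos k = b - k%:Z.
Proof.
elim: k => [|k IH]; first by rewrite subr0.
rewrite /rpos iterS -/(rpos k) IH -addrA -opprD; by rewrite -addn1 PoszD.
Qed.

Definition rd k := zdim V (rpos k).
Definition rst k : ('M[F]_(rd k, rd k.+1) + 'M[F]_(rd k.+1, rd k))%type :=
  if zeven (rpos k) then inl (zg V (rpos k))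
  else inr (castmx (erefl, congr1 (zdim V) (subrK 1 (rpos k))) (zf V (rpos k - 1))).


Variables v u : forall k, 'rV[F]_(rd k).
Hypothesis hg : good rst v u.
Hypothesis h0 : v 0%N *m (u 0%N)^T = 1%:M.

Definition rE k : 'M[F]_(rd k) := (u k)^T *m v k.
Definition re (n : int) : 'M[F]_(zdim V n) :=
  if n <= b then conform_mx 0 (rE `|b - n|%N) else 0.

Lemma rpos_le k : rpos k <= b.
Proof. rewrite rposE; lia. Qed.

Lemma rabs_pos k : `|b - rpos k|%N = k.
Proof. rewrite rposE; lia. Qed.

Lemma rpos_abs n : n <= b -> rpos `|b - n|%N = n.
Proof. rewrite rposE; lia. Qed.

Lemma reE' n k : rpos k = n -> re n = conform_mx 0 (rE k).
Proof. by move=> <-; rewrite /re rpos_le rabs_pos. Qed.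

Lemma reE k : re (rpos k) = rE k.
Proof. by rewrite (reE' erefl) conform_mx_id. Qed.

Lemma rE_idem k : rE k *m rE k = rE k.
Proof.
rewrite /rE; case: (hg k).1 => [e|[-> ->]]; last by rewrite !(mulmx0, trmx0, mul0mx).
by rewrite !mulmxA -(mulmxA _ (v k)) e mulmx1.
Qed.

Lemma re_idem n : re n *m re n = re n.
Proof.
case: (lerP n b) => hn; first by rewrite -(rpos_abs hn) reE rE_idem.
by rewrite /re ifF ?mulmx0 //; apply/negbTE; rewrite -ltNge.
Qed.

Lemma re_morph : (zeven b -> rE 0%N *m zf V b = 0) ->
  (~~ zeven b -> zg V (b + 1) *m conform_mx (0 : 'M_(zdim V (b + 1 - 1))) (rE 0%N) = 0) -> zzmorph re.
Proof.
move=> hF hG n ev.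
case: (lerP n b) => hn.
  have hk := rpos_abs hn; set k := `|b - n|%N in hk.
  split.
    case: (lerP (n + 1) b) => hn1.
      have hk' := rpos_abs hn1; set k' := absz (b - (n + 1))%R in hk'.
      have hk2 : rpos k'.+1 = n by move: hk'; rewrite !rposE; lia.
      rewrite -hk2 (reE' (k := k')); last by rewrite hk2.
      rewrite reE.
      have := (hg k').2; rewrite /comm /rst.
      have -> : zeven (rpos k') = false by rewrite hk'; move: ev; rewrite /zeven; lia.
      exact: cast_comm.
    have nb : n = b by lia.
    clear hk; subst n; rewrite {1}/re ifF; last by apply/negbTE; rewrite -ltNge.
    by rewrite mulmx0 (reE 0%N) hF.
  rewrite -hk; change (rpos k - 1) with (rpos k.+1); rewrite !reE.
  have evk : zeven (rpos k) by rewrite hk.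
  by have := (hg k).2; rewrite /comm /rst evk.
have hz m : b < m -> re m = 0.
  by move=> hm; rewrite /re ifF //; apply/negbTE; rewrite -ltNge.
rewrite (hz n hn) mul0mx mul0mx; split; first by rewrite hz ?mulmx0 //; lia.
case: (lerP (n - 1) b) => hn1; last by rewrite hz ?mulmx0.
have nb : n = b + 1 by lia.
subst n; rewrite /re ifT //.
have -> : absz (b - (b + 1 - 1))%R = 0%N by lia.
by apply: hG; move: ev; rewrite /zeven; lia.
Qed.

Lemma rtail_zero : zzindecomposable V -> (zeven b -> rE 0%N *m zf V b = 0) ->
  (~~ zeven b -> zg V (b + 1) *m conform_mx (0 : 'M_(zdim V (b + 1 - 1))) (rE 0%N) = 0) ->
  forall n, b < n -> zdim V n = 0%N.
Proof.
move=> hV hF hG.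
have [hz|h1] := split_idem (re_morph hF hG) re_idem hV.
  exfalso; have := hz b; rewrite (reE 0%N) => e0.
  have : v 0%N *m rE 0%N *m (u 0%N)^T = 1%:M.
    by rewrite /rE !mulmxA h0 mul1mx h0.
  by rewrite e0 mulmx0 mul0mx => /esym/one_eq0.
move=> n hn; have := h1 n; rewrite /re ifF; last by apply/negbTE; rewrite -ltNge.
by move=> e; apply: (@one_eq0 F); exact: (esym e).
Qed.
End Right.

Section Left.
Variable F : fieldType.
Variable V : zzmod F.
Variable b : int.

Definition lpos k := iter k (fun n : int => n + 1) b.
Lemma lposE k : lpos k = b + k%:Z.
Proof.
elim: k => [|k IH]; first by rewrite addr0.
by rewrite /lpos iterS -/(lpos k) IH -addrA -addn1 PoszD.
Qed.

Definition ld k := zdim V (lpos k).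
Definition lst k : ('M[F]_(ld k, ld k.+1) + 'M[F]_(ld k.+1, ld k))%type :=
  if zeven (lpos k) then inl (zf V (lpos k))
  else inr (castmx (erefl, congr1 (zdim V) (addrK 1 (lpos k))) (zg V (lpos k + 1))).

Variables v u : forall k, 'rV[F]_(ld k).
Hypothesis hg : good lst v u.
Hypothesis h0 : v 0%N *m (u 0%N)^T = 1%:M.

Definition lE k : 'M[F]_(ld k) := (u k)^T *m v k.
Definition le (n : int) : 'M[F]_(zdim V n) :=
  if b <= n then conform_mx 0 (lE (absz (n - b))) else 0.

Lemma lpos_ge k : b <= lpos k.
Proof. rewrite lposE; lia. Qed.

Lemma labs_pos k : absz (lpos k - b) = k.
Proof. rewrite lposE; lia. Qed.

Lemma lpos_abs n : b <= n -> lpos (absz (n - b)) = n.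
Proof. rewrite lposE; lia. Qed.

Lemma leE' n k : lpos k = n -> le n = conform_mx 0 (lE k).
Proof. by move=> <-; rewrite /le lpos_ge labs_pos. Qed.

Lemma leE k : le (lpos k) = lE k.
Proof. by rewrite (leE' erefl) conform_mx_id. Qed.

Lemma lE_idem k : lE k *m lE k = lE k.
Proof.
rewrite /lE; case: (hg k).1 => [e|[-> ->]]; last by rewrite !(mulmx0, trmx0, mul0mx).
by rewrite !mulmxA -(mulmxA _ (v k)) e mulmx1.
Qed.

Lemma le_idem n : le n *m le n = le n.
Proof.
case: (lerP b n) => hn; first by rewrite -(lpos_abs hn) leE lE_idem.
by rewrite /le ifF ?mulmx0 //; apply/negbTE; rewrite -ltNge.
Qed.

Lemma le_morph : (zeven b -> lE 0%N *m zg V b = 0) ->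
  (~~ zeven b -> zf V (b - 1) *m conform_mx (0 : 'M_(zdim V (b - 1 + 1))) (lE 0%N) = 0) -> zzmorph le.
Proof.
move=> hF hG n ev.
have hz m : m < b -> le m = 0.
  by move=> hm; rewrite /le ifF //; apply/negbTE; rewrite -ltNge.
case: (lerP b n) => hn.
  have hk := lpos_abs hn; set k := absz (n - b)%R in hk.
  split.
    rewrite -hk; change (lpos k + 1) with (lpos k.+1); rewrite !leE.
    have evk : zeven (lpos k) by rewrite hk.
    by have := (hg k).2; rewrite /comm /lst evk.
  case: (lerP b (n - 1)) => hn1.
    have hk' := lpos_abs hn1; set k' := absz (n - 1 - b)%R in hk'.
    have hk2 : lpos k'.+1 = n by move: hk'; rewrite !lposE; lia.
    rewrite -hk2 (leE' (k := k')); last by rewrite hk2 hk'.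
    rewrite leE.
    have := (hg k').2; rewrite /comm /lst.
    have -> : zeven (lpos k') = false by rewrite hk'; move: ev; rewrite /zeven; lia.
    exact: cast_comm.
  have nb : n = b by lia.
  clear hk; subst n; rewrite (hz (b - 1)); last by lia.
  by rewrite mulmx0 (leE 0%N) hF.
rewrite (hz n hn) mul0mx mul0mx; split; last by rewrite hz ?mulmx0 //; lia.
case: (lerP b (n + 1)) => hn1; last by rewrite hz ?mulmx0.
have nb : n = b - 1 by lia.
subst n; rewrite /le ifT; last by lia.
have -> : absz (b - 1 + 1 - b)%R = 0%N by lia.
by apply: hG; move: ev; rewrite /zeven; lia.
Qed.

Lemma ltail_zero : zzindecomposable V -> (zeven b -> lE 0%N *m zg V b = 0) ->
  (~~ zeven b -> zf V (b - 1) *m conform_mx (0 : 'M_(zdim V (b - 1 + 1))) (lE 0%N) = 0) ->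
  forall n, n < b -> zdim V n = 0%N.
Proof.
move=> hV hF hG.
have [hz|h1] := split_idem (le_morph hF hG) le_idem hV.
  exfalso; have := hz b; rewrite (leE 0%N) => e0.
  have : v 0%N *m lE 0%N *m (u 0%N)^T = 1%:M.
    by rewrite /lE !mulmxA h0 mul1mx h0.
  by rewrite e0 mulmx0 mul0mx => /esym/one_eq0.
move=> n hn; have := h1 n; rewrite /le ifF; last by apply/negbTE; rewrite -ltNge.
by move=> e; apply: (@one_eq0 F); exact: (esym e).
Qed.
End Left.

Import Order.TTheory GRing.Theory Num.Theory.
Local Open Scope ring_scope.

Lemma zero_maps (F : fieldType) m n (A : 'M[F]_(m, n)) : m = 0%N -> n = 0%N ->
  lin_injective A /\ lin_surjective A.
Proof.
move=> hm hn; subst m n; split.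
  by move=> x y _; apply/matrixP => ? [].
by move=> w; exists 0; apply/matrixP => ? [].
Qed.

Lemma right_part (F : fieldType) (V : zzmod F) (hV : zzindecomposable V) :
  exists t : int, 0 <= t /\
     forall i : int, zeven i -> t <= i ->
       lin_injective (zf V i) /\ lin_surjective (zg V i).
Proof.
case: (classic (exists i, zeven i /\ 0 <= i /\ ~ (lin_injective (zf V i) /\ lin_surjective (zg V i)))) => [[i [ev [i0 hbad]]]|nb]; last first.
  exists 0; split => // i ev hi; apply: NNPP => h; apply: nb; exists i; split => //.
have hz : forall n, i < n -> zdim V n = 0%N.
  case: (classic (lin_injective (zf V i))) => hinj.
    have hs : ~ lin_surjective (zg V i) by move=> hs; apply: hbad.
    have [l [l0 hl]] := nonsurj hs.
    have [v [u [u0 [p g]]]] := @frame_pair_dual F (rd V (i - 1)) (rst V (i - 1)) l l0.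
    move=> n hn; apply: (rtail_zero g p hV) => //; last by lia.
      by move=> h; exfalso; move: h ev; rewrite /zeven; lia.
    move=> _.
    have gen : forall j (ej : j = i), zg V j *m conform_mx (0 : 'M_(zdim V (j - 1))) (rE v u 0%N) = 0.
      by move=> j ->; rewrite conform_mx_id /rE u0 mulmxA hl mul0mx.
    by apply: gen; lia.
  have [x [x0 hx]] := noninj hinj.
  have [v [u [v0 [p g]]]] := @frame_pair F (rd V i) (rst V i) x x0.
  move=> n hn; apply: (rtail_zero g p hV) => //.
    by move=> _; rewrite /rE -mulmxA v0 hx mulmx0.
  by move=> h; exfalso; move: h; rewrite ev.
exists (i + 2); split; first by lia.
move=> n evn hn; split.
  by case: (@zero_maps F _ _ (zf V n)) => //; apply: hz; lia.
by case: (@zero_maps F _ _ (zg V n)) => //; apply: hz; lia.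
Qed.

Lemma left_part (F : fieldType) (V : zzmod F) (hV : zzindecomposable V) :
  exists s : int, s <= 0 /\
     forall i : int, zeven i -> i <= s ->
       lin_surjective (zf V i) /\ lin_injective (zg V i).
Proof.
case: (classic (exists i, zeven i /\ i <= 0 /\ ~ (lin_surjective (zf V i) /\ lin_injective (zg V i)))) => [[i [ev [i0 hbad]]]|nb]; last first.
  exists 0; split => // i ev hi; apply: NNPP => h; apply: nb; exists i; split => //.
have hz : forall n, n < i -> zdim V n = 0%N.
  case: (classic (lin_injective (zg V i))) => hinj.
    have hs : ~ lin_surjective (zf V i) by move=> hs; apply: hbad.
    have [l [l0 hl]] := nonsurj hs.
    have [v [u [u0 [p g]]]] := @frame_pair_dual F (ld V (i + 1)) (lst V (i + 1)) l l0.
    move=> n hn; apply: (ltail_zero g p hV) => //; last by lia.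
      by move=> h; exfalso; move: h ev; rewrite /zeven; lia.
    move=> _.
    have gen : forall j (ej : j = i), zf V j *m conform_mx (0 : 'M_(zdim V (j + 1))) (lE v u 0%N) = 0.
      by move=> j ->; rewrite conform_mx_id /lE u0 mulmxA hl mul0mx.
    by apply: gen; lia.
  have [x [x0 hx]] := noninj hinj.
  have [v [u [v0 [p g]]]] := @frame_pair F (ld V i) (lst V i) x x0.
  move=> n hn; apply: (ltail_zero g p hV) => //.
    by move=> _; rewrite /lE -mulmxA v0 hx mulmx0.
  by move=> h; exfalso; move: h; rewrite ev.
exists (i - 2); split; first by lia.
move=> n evn hn; split.
  by case: (@zero_maps F _ _ (zf V n)) => //; apply: hz; lia.
by case: (@zero_maps F _ _ (zg V n)) => //; apply: hz; lia.
Qed.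

Unset Implicit Arguments.
Theorem lemma3 (F : fieldType) (V : zzmod F) (hV : zzindecomposable V) :
  (exists t : int, 0 <= t /\
     forall i : int, zeven i -> t <= i ->
       lin_injective (zf V i) /\ lin_surjective (zg V i)) /\
  (exists s : int, s <= 0 /\
     forall i : int, zeven i -> i <= s ->
       lin_surjective (zf V i) /\ lin_injective (zg V i)).
Proof. split; [exact: right_part | exact: left_part]. Qed.
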